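(* Let $k$ be a field, $n\ge2$, $d\ge2$, and $\mathbf{m}\in\mathbb{N}^n$ with $|\mathbf{m}|=d$ and $\max(\mathbf{m})<d$. Let $P=\mathcal{P}_{n,d,\mathbf{m}}$ and $V=V_{n,d}$. Then the cokernel $C=V/P$ of the inclusion $P\subseteq V$ is a cyclic $P$-module generated by the class $x_1^{m_1}\cdots x_n^{m_n}+P$.
   Context: Let $S=k[x_1,\dots,x_n]$. $T_{n,d}=\{\mathbf{a}\in\mathbb{N}^n:|\mathbf{a}|=d\}$ with $|\mathbf{a}|=\sum a_i$, $\max(\mathbf{a})=\max_i a_i$. $V_{n,d}\subseteq S$ is the $k$-subalgebra generated by all monomials of degree $d$ (the $d$th Veronese subring); $\mathcal{P}_{n,d,\mathbf{m}}\subseteq S$ is the $k$-subalgebra generated by all degree-$d$ monomials except $x_1^{m_1}\cdots x_n^{m_n}$ (the pinched Veronese ring). *)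

(* Defs.v *)
From HB Require Import structures.
From mathcomp Require Import all_boot all_order all_algebra.
From mathcomp Require Import multinomials.mpoly.
Unset Printing Implicit Defensive.
Import GRing.Theory.
Local Open Scope ring_scope.

Definition in_gen_subalg (k : fieldType) (n : nat)
  (G : {mpoly k[n]} -> Prop) (p : {mpoly k[n]}) : Prop :=
  forall Q : {mpoly k[n]} -> Prop,
    (forall c : k, Q c%:MP) ->
    (forall x y, Q x -> Q y -> Q (x + y)) ->
    (forall x y, Q x -> Q y -> Q (x * y)) ->
    (forall g, G g -> Q g) ->
    Q p.

Definition veronese_gens (k : fieldType) (n d : nat) (g : {mpoly k[n]}) : Prop :=
  exists a : 'X_{1..n}, mdeg a = d /\ g = 'X_[a].

Definition pinched_gens (k : fieldType) (n d : nat) (m : 'X_{1..n})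
  (g : {mpoly k[n]}) : Prop :=
  exists a : 'X_{1..n}, mdeg a = d /\ a <> m /\ g = 'X_[a].

Definition in_veronese (k : fieldType) (n d : nat) : {mpoly k[n]} -> Prop :=
  @in_gen_subalg k n (@veronese_gens k n d).

Definition in_pinched (k : fieldType) (n d : nat) (m : 'X_{1..n}) : {mpoly k[n]} -> Prop :=
  @in_gen_subalg k n (@pinched_gens k n d m).

(* Main.v *)
Require Import Defs.
From HB Require Import structures.
From mathcomp Require Import all_boot all_order all_algebra.
From mathcomp Require Import multinomials.mpoly.
From mathcomp Require Import ring zify.
Import GRing.Theory.
Local Open Scope ring_scope.

Lemma two_pos (n d : nat) (m : 'X_{1..n}) :
  (2 <= d)%N -> mdeg m = d -> (forall i : 'I_n, (m i < d)%N) ->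
  exists i j : 'I_n, [/\ i != j, (0 < m i)%N & (0 < m j)%N].
Proof.
move=> d2 md lt.
have [i mi] : exists i : 'I_n, (0 < m i)%N.
  apply/existsP; apply: contraT; rewrite negb_exists => /forallP H.
  have : mdeg m = 0%N.
    rewrite mdegE big1 // => j _; move: (H j); by rewrite lt0n negbK => /eqP.
  by rewrite md => d0; rewrite d0 in d2.
case: (boolP [exists j, (j != i) && (0 < m j)%N]).
  by case/existsP => j /andP [ji mj]; exists i, j; rewrite eq_sym ji.
rewrite negb_exists => /forallP H.
have : mdeg m = m i.
  rewrite mdegE (bigD1 i) //= big1 ?addn0 // => j ji.
  by move: (H j); rewrite ji /= lt0n negbK => /eqP.
by move=> e; move: (lt i); rewrite -e md ltnn.
Qed.

Lemma sq_pinched (k : fieldType) (n d : nat) (m : 'X_{1..n}) :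
  (2 <= d)%N -> mdeg m = d -> (forall i : 'I_n, (m i < d)%N) ->
  @in_pinched k n d m ('X_[m] * 'X_[m]).
Proof.
move=> d2 md lt.
have [i [j [ij mi mj]]] := @two_pos n d m d2 md lt.
set c := (m - U_(j))%MM. set c' := (m - U_(i))%MM.
have hc : (c + U_(j))%MM = m.
  apply: submK; apply/mnm_lepP => l; rewrite mnm1E; case: eqP => // e; by rewrite -e.
have hc' : (c' + U_(i))%MM = m.
  apply: submK; apply/mnm_lepP => l; rewrite mnm1E; case: eqP => // e; by rewrite -e.
have e : (m + m = (c + U_(i)) + (c' + U_(j)))%MM.
  apply/mnmP => l; have := (iffLR (mnmP _ _) hc l); have := (iffLR (mnmP _ _) hc' l); rewrite !mnmDE; lia.
have da : mdeg (c + U_(i))%MM = d by rewrite mdegD mdeg1 -md -hc mdegD mdeg1.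
have db : mdeg (c' + U_(j))%MM = d by rewrite mdegD mdeg1 -md -hc' mdegD mdeg1.
have na : (c + U_(i))%MM <> m.
  move=> h; move/mnmP: h => /(_ j); rewrite -[in RHS]hc !mnmDE !mnm1E eqxx.
  rewrite (negbTE ij) => /eqP; lia.
have nb : (c' + U_(j))%MM <> m.
  move=> h; move/mnmP: h => /(_ i); rewrite -[in RHS]hc' !mnmDE !mnm1E eqxx.
  rewrite eq_sym (negbTE ij) => /eqP; lia.
rewrite -mpolyXD e mpolyXD => Q _ _ HM HG.
apply: HM; apply: HG; [exists (c + U_(i))%MM | exists (c' + U_(j))%MM]; by [].
Qed.

Theorem corollary2p19 (k : fieldType) (n d : nat) (m : 'X_{1..n}) :
  (2 <= n)%N -> (2 <= d)%N -> mdeg m = d -> (forall i : 'I_n, (m i < d)%N) ->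
  @in_veronese k n d 'X_[m] /\
  (forall v : {mpoly k[n]}, @in_veronese k n d v ->
     exists p q : {mpoly k[n]},
       @in_pinched k n d m p /\ @in_pinched k n d m q /\ v = p + q * 'X_[m]).
Proof.
move=> n2 d2 md lt; split.
  by move=> Q _ _ _ HG; apply: HG; exists m.
have Pc : forall c : k, @in_pinched k n d m c%:MP by move=> c Q HC _ _ _; apply: HC.
have PD : forall x y, @in_pinched k n d m x -> @in_pinched k n d m y ->
    @in_pinched k n d m (x + y).
  by move=> x y hx hy Q HC HD HM HG; apply HD; [exact: (hx Q HC HD HM HG) | exact: (hy Q HC HD HM HG)].
have PM : forall x y, @in_pinched k n d m x -> @in_pinched k n d m y ->
    @in_pinched k n d m (x * y).
  by move=> x y hx hy Q HC HD HM HG; apply HM; [exact: (hx Q HC HD HM HG) | exact: (hy Q HC HD HM HG)].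
have sq := @sq_pinched k n d m d2 md lt.
move=> v hv; apply: (hv (fun v => exists p q : {mpoly k[n]}, @in_pinched k n d m p /\ @in_pinched k n d m q /\ v = p + q * 'X_[m])).
- move=> c; exists c%:MP, 0; split; [exact: Pc | split].
    by rewrite -mpolyC0; apply Pc.
  by rewrite mul0r addr0.
- move=> x y [p1 [q1 [h1 [h2 ->]]]] [p2 [q2 [h3 [h4 ->]]]].
  exists (p1 + p2), (q1 + q2); split; [exact (PD _ _ h1 h3) | split; [exact (PD _ _ h2 h4)|]].
  by rewrite mulrDl addrACA.
- move=> x y [p1 [q1 [h1 [h2 ->]]]] [p2 [q2 [h3 [h4 ->]]]].
  exists (p1 * p2 + q1 * q2 * ('X_[m] * 'X_[m])), (p1 * q2 + q1 * p2).
  split; [apply PD; [exact: PM | apply PM; [exact: PM | exact: sq]] |].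
  split; [apply PD; exact: PM |].
  ring.
- move=> g [a [da ->]]; case: (eqVneq a m) => [->|am].
    exists 0, 1; split; [by rewrite -mpolyC0; apply Pc|].
    by split; [rewrite -mpolyC1; apply Pc | rewrite add0r mul1r].
  exists 'X_[a], 0; split; [|split; [by rewrite -mpolyC0; apply Pc|]].
    by move=> Q _ _ _ HG; apply: HG; exists a; split=> //; split=> //; exact/eqP.
  by rewrite mul0r addr0.
Qed.
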